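(* Let $G$ be a finite simple graph that is $\mathcal{MC}$-edge connected and satisfies $\mathrm{ann}\,G=0$, and let $\mathcal{N}G$ be its normal graph algebra over a field $\mathbb{F}$ of characteristic not $2$. If $g$ is an edge-scaling automorphism of $\mathcal{N}G$, then $g$ is a scalar automorphism.
   Context: For a finite simple graph $G$ with vertex set $VG$ and edge set $EG$, $\mathcal{N}G=U_G\oplus\mathfrak{Z}_G$ with $U_G$ having basis $VG$ and $\mathfrak{Z}_G$ basis $EG$ (edge with endpoints $x,y$ written $[x,y]$), commutative bilinear product determined by: for distinct vertices $x,y$, $xy=[x,y]$ if adjacent and $0$ otherwise; $x^2=\sum_{y\sim x}[x,y]$; products involving $\mathfrak{Z}_G$ are $0$. $\mathrm{ann}\,G=\{u\in U_G:uU_G=0\}$. An automorphism of $\mathcal{N}G$ is a product-preserving linear bijection $g$ of $\mathcal{N}G$ with $g(U_G)=U_G$ and $g(\mathfrak{Z}_G)=\mathfrak{Z}_G$. It is edge-scaling if $g(\mathfrak{e})\in\langle\mathfrak{e}\rangle$ for every edge $\mathfrak{e}$, and scalar if there is $\alpha\in\mathbb{F}$, $\alpha\neq0$, with $g(u)=\alpha u$ for $u\in U_G$ and $g(\mathfrak{z})=\alpha^2\mathfrak{z}$ for $\mathfrak{z}\in\mathfrak{Z}_G$. A set of distinct edges $\mathfrak{e}_1,\dots,\mathfrak{e}_n$ is coherent if there are scalars $\alpha_i$, not all $0$, such that at each vertex the sum of the $\alpha_i$ over incident $\mathfrak{e}_i$ is $0$; a graph is minimally coherent if its edge set is coherent but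 no proper subset is. $G$ is $\mathcal{MC}$-edge connected if for any two edges $\mathfrak{e},\mathfrak{f}$ there is a sequence $G_1,\dots,G_m$ of minimally coherent subgraphs of $G$ with $\mathfrak{e}\in EG_1$, $\mathfrak{f}\in EG_m$, and $EG_i\cap EG_{i+1}\neq\emptyset$ for $1\le i\le m-1$. *)

(* Defs.v *)
From HB Require Import structures.
From mathcomp Require Import all_boot all_order all_algebra.
Set Implicit Arguments. Unset Strict Implicit. Unset Printing Implicit Defensive.
Import Order.TTheory GRing.Theory Num.Theory.
Local Open Scope ring_scope.

Section NormalGraphAlgebra.
Variables (F : fieldType) (T : finType) (adj : rel T).

Definition is_edge (E : {set T}) : bool :=
  [exists x, [exists y, adj x y && (E == [set x; y])]].

Definition edge := {E : {set T} | is_edge E}.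

(* U_G = F^VG (coordinates on the vertex basis), Z_G = F^EG. *)
Definition NG := ({ffun T -> F} * {ffun edge -> F})%type.

Definition addN (p q : NG) : NG :=
  ([ffun x => p.1 x + q.1 x], [ffun E => p.2 E + q.2 E]).
Definition scaleN (a : F) (p : NG) : NG :=
  ([ffun x => a * p.1 x], [ffun E => a * p.2 E]).

(* product of basis vertices x, y as an element of Z_G:
   x^2 = sum of edges at x; xy = [x,y] if adjacent, 0 otherwise. *)
Definition basis_prod (x y : T) (E : edge) : F :=
  if x == y then (x \in val E)%:R else (val E == [set x; y])%:R.

Definition mulU (u v : {ffun T -> F}) : {ffun edge -> F} :=
  [ffun E => \sum_(x : T) \sum_(y : T) u x * v y * basis_prod x y E].

Definition mulN (p q : NG) : NG := ([ffun => 0], mulU p.1 q.1).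

Definition inU (p : NG) : Prop := p.2 = [ffun => 0].
Definition inZ (p : NG) : Prop := p.1 = [ffun => 0].

Definition vertU (u : {ffun T -> F}) : NG := (u, [ffun => 0]).
Definition edgZ (z : {ffun edge -> F}) : NG := ([ffun => 0], z).
Definition edge_vec (E : edge) : NG := edgZ [ffun E' => (E' == E)%:R].

Definition linearN (g : NG -> NG) : Prop :=
  forall a p q, g (addN (scaleN a p) q) = addN (scaleN a (g p)) (g q).

Definition automorphismN (g : NG -> NG) : Prop :=
  [/\ linearN g, bijective g,
      (forall p q, g (mulN p q) = mulN (g p) (g q)),
      (forall p, inU p -> inU (g p)) /\ (forall q, inU q -> exists2 p, inU p & g p = q) &
      (forall p, inZ p -> inZ (g p)) /\ (forall q, inZ q -> exists2 p, inZ p & g p = q)].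

Definition edge_scaling (g : NG -> NG) : Prop :=
  forall E : edge, exists c : F, g (edge_vec E) = scaleN c (edge_vec E).

Definition scalar_aut (g : NG -> NG) : Prop :=
  exists2 alpha : F, alpha != 0 &
    (forall u, g (vertU u) = scaleN alpha (vertU u)) /\
    (forall z, g (edgZ z) = scaleN (alpha ^+ 2) (edgZ z)).

Definition ann_zero : Prop :=
  forall u : {ffun T -> F}, (forall v, mulU u v = [ffun => 0]) -> u = [ffun => 0].

(* coherence of a set of edges (subgraph given by its edge set) *)
Definition coherent (S : {set edge}) : Prop :=
  exists alpha : edge -> F, (exists2 E, E \in S & alpha E != 0) /\
    forall x : T, \sum_(E in S | x \in val E) alpha E = 0.

Definition minimally_coherent (S : {set edge}) : Prop :=
  coherent S /\ forall S' : {set edge}, S' \proper S -> ~ coherent S'.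

Definition MC_edge_connected : Prop :=
  forall E1 E2 : edge, exists (m : nat) (Gs : nat -> {set edge}),
    [/\ (0 < m)%N, (forall i, (i < m)%N -> minimally_coherent (Gs i)),
        E1 \in Gs 0%N, E2 \in Gs m.-1 &
        forall i, (i.+1 < m)%N -> Gs i :&: Gs i.+1 != set0].

End NormalGraphAlgebra.

(* Main.v *)
Require Import Defs.
From HB Require Import structures.
From mathcomp Require Import all_boot all_order all_algebra.
Import GRing.Theory.
Set Implicit Arguments. Unset Strict Implicit.
Local Open Scope ring_scope.

Definition sigE (F : fieldType) (T : finType) (adj : rel T) (E : edge adj)
  (u : {ffun T -> F}) : F := \sum_(y in val E) u y.

Definition delta (F : fieldType) (T : finType) (x : T) : {ffun T -> F} :=
  [ffun y => (y == x)%:R].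

Lemma sigE_delta (F : fieldType) (T : finType) (adj : rel T) (E : edge adj) x :
  sigE E (delta F x) = (x \in val E)%:R.
Proof.
rewrite /sigE; case: (boolP (x \in val E)) => hx.
  rewrite (bigD1 x) //= ffunE eqxx big1 ?addr0 // => y /andP[_ hy].
  by rewrite ffunE (negbTE hy).
by rewrite big1 // => y hy; rewrite ffunE; case: eqP => // e; rewrite -e hy in hx.
Qed.

Lemma pair_eq (T : finType) (a b x y : T) :
  x != y -> ([set a; b] == [set x; y]) = (x \in [set a; b]) && (y \in [set a; b]).
Proof.
move=> nxy; apply/idP/idP.
  by move/eqP => ->; rewrite !inE !eqxx orbT.
rewrite !inE => /andP[hx hy].
case/orP: hx => /eqP ex; case/orP: hy => /eqP ey; subst.
- by rewrite eqxx in nxy.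
- by [].
- by rewrite setUC.
- by rewrite eqxx in nxy.
Qed.

Lemma basis_prodE (F : fieldType) (T : finType) (adj : rel T) (E : edge adj) x y :
  basis_prod F x y E = ((x \in val E) && (y \in val E))%:R.
Proof.
rewrite /basis_prod; case: eqP => [<-|/eqP nxy]; first by rewrite andbb.
case: E => /= E; case/existsP => a /existsP [b /andP[_ /eqP ->]].
by rewrite pair_eq.
Qed.

Lemma mulU_sig (F : fieldType) (T : finType) (adj : rel T) (u v : {ffun T -> F}) (E : edge adj) :
  mulU adj u v E = sigE E u * sigE E v.
Proof.
rewrite /mulU ffunE /sigE !(big_mkcond (fun y => y \in val E)) /= big_distrlr /=.
apply: eq_bigr => x _; apply: eq_bigr => y _.
rewrite basis_prodE.
by case: (x \in val E); case: (y \in val E); rewrite /= ?mulr0 ?mul0r ?mulr1.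
Qed.

Lemma sigE_lin (F : fieldType) (T : finType) (adj : rel T) (E : edge adj) (u v : {ffun T -> F}) l :
  sigE E [ffun x => u x - l * v x] = sigE E u - l * sigE E v.
Proof.
rewrite /sigE mulr_sumr -sumrN -big_split /=.
by apply: eq_bigr => y _; rewrite ffunE.
Qed.

Lemma mc_full (F : fieldType) (T : finType) (adj : rel T) (S : {set edge adj}) (b : edge adj -> F) :
  minimally_coherent F S -> (forall x, \sum_(E in S | x \in val E) b E = 0) ->
  (exists2 E, E \in S & b E != 0) -> forall E, E \in S -> b E != 0.
Proof.
move=> [_ hmin] hb [E1 hE1 hb1] E hE.
set S' := [set E in S | b E != 0].
have sub : S' \subset S by apply/subsetP => e; rewrite inE => /andP[].
have coh : coherent F S'.
  exists b; split; first by exists E1; rewrite // inE hE1.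
  move=> x; rewrite -[RHS](hb x) big_mkcond [RHS]big_mkcond /=.
  apply: eq_bigr => e _; rewrite inE.
  by case: (e \in S); case: (x \in val e); case: eqP => //= ->.
apply/negP => hb0; apply: (hmin S' _ coh).
rewrite properEneq sub andbT; apply/eqP => eq.
by move: hE; rewrite -eq inE hb0 andbF.
Qed.

Theorem proposition9p2 (F : fieldType) (T : finType) (adj : rel T)
  (adj_irr : irreflexive adj) (adj_sym : symmetric adj)
  (char2 : (2%:R : F) != 0)
  (hMC : MC_edge_connected F adj) (hann : ann_zero F adj)
  (g : NG F adj -> NG F adj) (hg : automorphismN g) (hes : edge_scaling g) :
  scalar_aut g.
Proof.
case: hg => hlin hbij hmul [hU1 hU2] [hZ1 hZ2].
pose z0 : NG F adj := ([ffun => 0], [ffun => 0]).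
have g0 : g z0 = z0.
  have := hlin 1 z0 z0.
  have -> : addN (scaleN 1 z0) z0 = z0.
    by rewrite /addN /scaleN /=; congr pair; apply/ffunP => x; rewrite !ffunE mulr0 addr0.
  rewrite /z0; case: (g _) => a b [ha hb]; congr pair; apply/ffunP => x; rewrite ffunE.
    by move/ffunP: ha => /(_ x); rewrite !ffunE mul1r => h; apply/(addrI (a x)); rewrite addr0 -h.
  by move/ffunP: hb => /(_ x); rewrite !ffunE mul1r => h; apply/(addrI (b x)); rewrite addr0 -h.
pose c E := (g (edge_vec F E)).2 E.
have hc : forall E, g (edge_vec F E) = scaleN (c E) (edge_vec F E).
  move=> E; case: (hes E) => c0 h; rewrite /c h /= !ffunE eqxx mulr1 //.
have hcz : forall E, c E != 0.
  move=> E; apply/eqP => h0.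
  have : edge_vec F E = z0.
    apply: (bij_inj hbij); rewrite g0 hc h0 /scaleN /z0 /=; congr pair; apply/ffunP => x; by rewrite !ffunE mul0r.
  move/(congr1 (fun p : NG F adj => p.2 E)); rewrite /= !ffunE eqxx => /eqP; by rewrite oner_eq0.
have hZ : forall z, g (edgZ z) = edgZ [ffun E => c E * z E].
  move=> z.
  suff H : forall s : seq (edge adj), uniq s ->
     g (edgZ [ffun E => if E \in s then z E else 0]) = edgZ [ffun E => if E \in s then c E * z E else 0].
    have := H (enum [set: edge adj]) (enum_uniq _).
    have -> : [ffun E => if E \in enum [set: edge adj] then z E else 0] = z.
      by apply/ffunP => E; rewrite ffunE mem_enum inE.
    move=> ->; congr edgZ; apply/ffunP => E; by rewrite !ffunE mem_enum inE.
  elim => [|a s IH] /=.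
    move=> _; have -> : edgZ [ffun E => if E \in [::] then z E else 0] = z0.
      by rewrite /edgZ /z0; congr pair; apply/ffunP => E; rewrite !ffunE in_nil.
    rewrite g0 /edgZ /z0; congr pair; apply/ffunP => E; by rewrite !ffunE in_nil.
  case/andP => has us.
  have -> : edgZ [ffun E => if E \in a :: s then z E else 0] =
      addN (scaleN (z a) (edge_vec F a)) (edgZ [ffun E => if E \in s then z E else 0]).
    rewrite /addN /scaleN /edgZ /edge_vec /=; congr pair; apply/ffunP => E; rewrite !ffunE ?mulr0 ?addr0 // in_cons.
    case: (eqVneq E a) => [->|nE] /=; first by rewrite (negbTE has) mulr1 addr0.
    by rewrite mulr0 add0r.
  rewrite hlin hc IH //.
  rewrite /addN /scaleN /edgZ /edge_vec /=; congr pair; apply/ffunP => E; rewrite !ffunE ?mulr0 ?addr0 // in_cons.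
  case: (eqVneq E a) => [->|nE] /=; first by rewrite (negbTE has) mulr1 addr0 mulrC.
  by rewrite mulr0 mulr0 add0r.
pose A u := (g (vertU adj u)).1.
have hsig : forall u v E, sigE E (A u) * sigE E (A v) = c E * (sigE E u * sigE E v).
  move=> u v E; have := hmul (vertU adj u) (vertU adj v).
  move=> h; change (g (edgZ (mulU adj u v)) = edgZ (mulU adj (A u) (A v))) in h.
  move: h; rewrite hZ => /(congr1 (fun p : NG F adj => p.2 E)) /=.
  by rewrite mulU_sig ffunE mulU_sig => ->.
have hne : forall E : edge adj, exists x, x \in val E.
  case=> E /= /existsP [a /existsP [b /andP[_ /eqP ->]]].
  by exists a; rewrite !inE eqxx.
pose lam (E : edge adj) := if [pick x in val E] is Some p then sigE E (A (delta F p)) else 0.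
have hlam : forall E, lam E ^+ 2 = c E /\ forall u, sigE E (A u) = lam E * sigE E u.
  move=> E; rewrite /lam; case: pickP => [p hp | h0]; last first.
    by case: (hne E) => x hx; have := h0 x; rewrite hx.
  set mu := sigE E (A (delta F p)).
  have hd : sigE E (delta F p) = 1 by rewrite sigE_delta hp.
  have hmu : mu ^+ 2 = c E by rewrite expr2 /mu hsig hd !mulr1.
  split => // u.
  have mu0 : mu != 0.
    by apply: contra (hcz E) => /eqP m0; rewrite -hmu m0 expr2 mul0r.
  have := hsig u (delta F p) E; rewrite hd mulr1 -/mu -hmu expr2 => h.
  by apply: (mulIf mu0); rewrite h mulrAC.
have hcirc : forall S, minimally_coherent F S -> forall E0 E, E0 \in S -> E \in S -> lam E = lam E0.
  move=> S hS E0 E h0 hE.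
  have [[al [[E1 hE1 hal1] hal]] _] := hS.
  have alnz := mc_full hS hal (ex_intro2 _ _ E1 hE1 hal1).
  have hsum : forall x, \sum_(E in S | x \in val E) al E * lam E = 0.
    move=> x; pose w := A (delta F x).
    have : \sum_(E in S) al E * sigE E w = 0.
      transitivity (\sum_y w y * \sum_(E in S | y \in val E) al E); last first.
        by rewrite big1 // => y _; rewrite hal mulr0.
      transitivity (\sum_E \sum_y (if (E \in S) && (y \in val E) then al E * w y else 0)).
        rewrite big_mkcond; apply: eq_bigr => e _.
        case: (e \in S) => /=; last by rewrite big1.
        by rewrite /sigE mulr_sumr big_mkcond; apply: eq_bigr => y _; case: (y \in val e); rewrite ?mulr0.
      rewrite exchange_big; apply: eq_bigr => y _.
      rewrite mulr_sumr [RHS]big_mkcond; apply: eq_bigr => e _.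
      by case: (e \in S); case: (y \in val e); rewrite //= mulrC.
    move=> h; rewrite -[RHS]h big_mkcond [RHS]big_mkcond; apply: eq_bigr => e _.
    case: (e \in S) => //=; rewrite (proj2 (hlam e)) sigE_delta.
    by case: (x \in val e); rewrite /= ?mulr1 ?mulr0.
  apply/eqP; apply: contraT => hne'.
  pose b e := al e * (lam e - lam E0).
  have hb : forall x, \sum_(e in S | x \in val e) b e = 0.
    move=> x; rewrite /b.
    under eq_bigr => e _ do rewrite mulrBr.
    rewrite sumrB hsum -mulr_suml.
    have -> : \sum_(i in S | x \in val i) al i = 0 by apply: hal.
    by rewrite mul0r subrr.
  have hbE : b E != 0 by rewrite /b mulf_neq0 ?alnz // subr_eq0.
  have := mc_full hS hb (ex_intro2 _ _ E hE hbE) h0.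
  by rewrite /b subrr mulr0 eqxx.
have hchain : forall E1 E2, lam E2 = lam E1.
  move=> E1 E2; case: (hMC E1 E2) => m [Gs [m0 hGs h1 h2 hov]].
  suff H : forall i, (i < m)%N -> forall E, E \in Gs i -> lam E = lam E1.
    by apply: (H m.-1) => //; rewrite ltn_predL.
  elim => [|i IH] hi E hE.
    exact: hcirc (hGs 0%N hi) E1 E h1 hE.
  have := hov i hi.
  case/set0Pn => E' /setIP [hE'1 hE'2].
  by rewrite (hcirc _ (hGs _ hi) E' E hE'2 hE) (IH (ltnW hi) E' hE'1).
pose l := if [pick E : edge adj] is Some E0 then lam E0 else 1.
have hl : forall E, lam E = l.
  move=> E; rewrite /l; case: pickP => [E0 _ | h]; first exact: hchain.
  by have := h E.
have l0 : l != 0.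
  rewrite /l; case: pickP => [E0 _|_]; last exact: oner_neq0.
  case: (hlam E0) => h _; apply: contra (hcz E0) => /eqP e.
  by rewrite -h e expr2 mul0r.
exists l => //; split.
  move=> u.
  have hA : A u = [ffun x => l * u x].
    have := hann [ffun x => A u x - l * u x].
    have hw : forall v, mulU adj [ffun x => A u x - l * u x] v = [ffun => 0].
      move=> v; apply/ffunP => E.
      by rewrite mulU_sig sigE_lin (proj2 (hlam E)) hl subrr mul0r ffunE.
    move=> /(_ hw) h; apply/ffunP => x; move/ffunP: h => /(_ x).
    by rewrite !ffunE => /eqP; rewrite subr_eq0 => /eqP.
  have hU := hU1 (vertU adj u) (erefl _).
  move: hU hA; rewrite /A /inU; case: (g (vertU adj u)) => a b /= -> ->.
  by rewrite /scaleN /vertU /=; congr pair; apply/ffunP => ?; rewrite !ffunE ?mulr0.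
move=> z; rewrite hZ /edgZ /scaleN /=; congr pair; apply/ffunP => E; rewrite !ffunE ?mulr0 //.
by rewrite -(proj1 (hlam E)) hl.
Qed.
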